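(* Let $K$ be a positive integer. Consider a nonempty configuration and an integer shift $G$ with $2^K\le A(G)<2^b$. In one outer iteration of the inter-level sampler, let the number of scanned levels be the number of level indices $\lambda,\lambda-1,\dots$ visited by the scan up to and including the level at which the scan stops (returns, or enters the refinement loop). Its expectation is at most $2b+\frac{N(N+1)}{2^{K+1}}$.
   Context: Fix an integer $b\ge 2$. There is a set $\mathcal L$ of $N$ levels, which are consecutive integers. Each level $\ell$ holds a finite (possibly empty) multiset of normalized significands, each an integer in $[2^{b-1},2^b)$. Let $z$ be the total number of stored significands over all levels; assume $z<2^b$. For each level, $SS_\ell$ is the sum of its significands (so $SS_\ell=0$ iff the level is empty); set $SS_\ell=0$ for integers $\ell\notin\mathcal L$. The level weight is $W_\ell=SS_\ell2^\ell$. For an integer global shift $G$, $A_\ell(G)=\lfloor W_\ell2^G\rfloor+1$ if $SS_\ell>0$ and $A_\ell(G)=0$ if $SS_\ell=0$; $A(G)=\sum_\ell A_\ell(G)$. The configuration is nonempty if $z\ge1$; then $\lambda$ denotes the largest nonempty level. Inter-level sampler (Algorithm 1), with shift $G$ and $A=A(G)$: it performs independent outer iterations. In an outer iteration, draw $x$ uniformly from $\{1,\dots,A\}$ and scan the level indices in decreasing order starting from $\lambda$ (empty levels included, with $A_\ell(G)=0$). At the current level $\ell$: if $x<A_\ell(G)$, return $\ell$; if $x=A_\ell(G)$, run the refinement loop for $m=1,2,\dots$: draw $r$ uniformly from $\{0,\dots,2^b-1\}$ independently, let $t=\lfloor SS_\ell 2^{\ell+G+mb}\rfloor \bmod 2^b$;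 if $r<t$ return $\ell$; else if $r>t$ or $\ell+G+mb\ge 0$, abandon this outer iteration and start a new one; otherwise continue with $m+1$. If $x>A_\ell(G)$, set $x\leftarrow x-A_\ell(G)$ and move to the next lower level. *)

(* Defs.v *)
From HB Require Import structures.
From mathcomp Require Import all_boot all_order all_algebra.
Set Implicit Arguments. Unset Strict Implicit. Unset Printing Implicit Defensive.
Import Order.TTheory GRing.Theory Num.Theory.
Local Open Scope ring_scope.

(* A configuration: N consecutive levels lo, lo+1, ..., lo+N-1 (all ints);
   level lo+i (i < N) holds the multiset (sequence) of significands  ms i. *)

Definition normalized (b N : nat) (ms : nat -> seq nat) : Prop :=
  forall i : nat, (i < N)%N -> forall s, s \in ms i -> (2 ^ b.-1 <= s < 2 ^ b)%N.

Definition total_count (N : nat) (ms : nat -> seq nat) : nat :=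
  (\sum_(i < N) size (ms i))%N.

Definition SS (lo : int) (N : nat) (ms : nat -> seq nat) (l : int) : nat :=
  if (lo <= l) && (l < lo + N%:Z) then sumn (ms `|l - lo|%N) else 0%N.

Definition Alev (lo : int) (N : nat) (ms : nat -> seq nat) (G l : int) : int :=
  if (0 < SS lo N ms l)%N
  then Num.floor ((SS lo N ms l)%:R * (2%:R : rat) ^ l * (2%:R : rat) ^ G) + 1
  else 0.

Definition Atot (lo : int) (N : nat) (ms : nat -> seq nat) (G : int) : int :=
  \sum_(i < N) Alev lo N ms G (lo + (i : nat)%:Z).

(* lambda = largest nonempty level (meaningful when the configuration is nonempty) *)
Definition lambda (lo : int) (N : nat) (ms : nat -> seq nat) : int :=
  lo + (\max_(i < N | ms i != [::]) (i : nat))%:Z.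

(* Scan of one outer iteration for the drawn value x, starting at level l,
   returning the number of scanned levels (up to and including the level at
   which the scan stops, i.e. where x <= A_l: return if x < A_l, refinement
   loop if x = A_l).  [fuel] bounds the number of levels; the scan with
   1 <= x <= A(G) started at lambda stops after at most N levels. *)
Fixpoint scan_count (Af : int -> int) (l x : int) (fuel : nat) : nat :=
  match fuel with
  | 0 => 0
  | fuel'.+1 =>
      if x <= Af l then 1
      else (scan_count Af (l - 1) (x - Af l) fuel').+1
  end.

Definition expected_scanned (lo : int) (N : nat) (ms : nat -> seq nat) (G : int) : rat :=
  let A := Atot lo N ms G in
  (A%:~R)^-1 *
  \sum_(1 <= x < `|A|.+1)
     (scan_count (Alev lo N ms G) (lambda lo N ms) x%:Z N)%:R.

(* Main.v *)
Require Import Defs.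
From HB Require Import structures.
From mathcomp Require Import all_boot all_order all_algebra.
From mathcomp Require Import zify ring lra.
Import Order.TTheory GRing.Theory Num.Theory.
Local Open Scope ring_scope.

Lemma abel (w : nat -> rat) n :
  \sum_(j < n) (j.+1)%:R * w j = \sum_(k < n) \sum_(k <= j < n) w j.
Proof.
elim: n => [|n IH]; first by rewrite !big_ord0.
rewrite big_ord_recr /= IH [RHS]big_ord_recr /= big_nat1.
have -> : \sum_(i < n) \sum_(i <= j < n.+1) w j =
          \sum_(i < n) (\sum_(i <= j < n) w j + w n).
  by apply: eq_bigr => i _; rewrite big_nat_recr //= ltnW.
rewrite big_split /= sumr_const card_ord -mulr_natl -addrA; congr (_ + _).
by rewrite mulr1 mulr_natl mulrS addrC.
Qed.

Lemma geom m : \sum_(i < m) (2^-1 : rat) ^+ i = 2 - 2 * (2^-1) ^+ m.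
Proof.
elim: m => [|m IH]; first by rewrite big_ord0 expr0 mulr1 subrr.
rewrite big_ord_recr /= IH exprSr.
set x := (2^-1 : rat) ^+ m. by field.
Qed.

Lemma core (b n : nat) (w : nat -> rat) : (2 <= b)%N -> (0 < n)%N ->
  (forall j, 0 <= w j) ->
  (forall k, (k < n)%N -> 2 ^+ k * \sum_(k <= j < n) w j <= 2 ^+ b.+1 * w 0%N) ->
  \sum_(j < n) (j.+1)%:R * w j <= (2 * b)%:R * \sum_(j < n) w j.
Proof.
move=> b2 n0 w0 hyp.
set T := \sum_(j < n) w j.
have Tsplit : T = w 0%N + \sum_(1 <= j < n) w j.
  by rewrite /T -(big_mkord xpredT) big_ltn.
have tail_le k : (1 <= k <= n)%N -> \sum_(k <= j < n) w j <= T - w 0%N.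
  move=> /andP[k1 kn]; rewrite Tsplit [w 0%N + _]addrC addrK (@big_cat_nat _ _ _ k 1 n) // /=.
  by rewrite lerDr sumr_ge0.
pose h k := if k == 0%N then T else if (k <= b)%N then T - w 0%N
            else w 0%N * (2^-1) ^+ (k - b.+1).
have th k : (k < n)%N -> \sum_(k <= j < n) w j <= h k.
  move=> kn; rewrite /h; case: eqP => [->|/eqP k0].
    by rewrite big_mkord.
  case: ifP => kb.
    by apply: tail_le; rewrite lt0n k0 ltnW.
  have := hyp k kn.
  have -> : k = (b.+1 + (k - b.+1))%N by lia.
  rewrite addKn exprD -mulrA ler_pM2l ?exprn_gt0 // => H.
  by rewrite exprVn ler_pdivlMr ?exprn_gt0 // mulrC.
have hge k : 0 <= h k.
  rewrite /h; case: eqP => _; first by rewrite /T sumr_ge0.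
  case: ifP => _; last by rewrite mulr_ge0 // exprn_ge0 // invr_ge0.
  by apply: le_trans (tail_le n _); [rewrite big_geq | rewrite n0 leqnn].
rewrite abel.
apply: (@le_trans _ _ (\sum_(k < n) h k)); first by apply: ler_sum => i _; apply: th.
apply: (@le_trans _ _ (\sum_(0 <= k < b.+1 + n) h k)).
  rewrite -(big_mkord xpredT) (@big_cat_nat _ _ _ n 0 (b.+1 + n)) //=; last by lia.
  by rewrite lerDl sumr_ge0.
rewrite (@big_cat_nat _ _ _ 1 0 (b.+1 + n)) //=.
rewrite (@big_cat_nat _ _ _ b.+1 1 (b.+1 + n)) //=; last by lia.
rewrite big_nat1 {1}/h /=.
rewrite (@eq_big_nat _ _ _ 1 b.+1 _ (fun=> T - w 0%N)); last first.
  by move=> i /andP[i1 ib]; rewrite /h; case: eqP => [i0|_]; [lia| rewrite ifT //; lia].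
rewrite sumr_const_nat subn1 /=.
rewrite -{1}[b.+1]add0n big_addn [(b.+1 + n - b.+1)%N]addKn.
rewrite (@eq_big_nat _ _ _ 0 n _ (fun i => w 0%N * (2^-1) ^+ i)); last first.
  move=> i _; rewrite /h; case: eqP => [|_]; first by lia.
  by rewrite ifF ?addnK //; lia.
rewrite -mulr_sumr big_mkord geom.
have x0 : 0 <= (2^-1 : rat) ^+ n by rewrite exprn_ge0 // invr_ge0.
have w00 := w0 0%N.
have Tw : 0 <= T - w 0%N by apply: le_trans (tail_le n _); [rewrite big_geq | rewrite n0 leqnn].
rewrite -[(T - w 0%N) *+ b]mulr_natr natrM.
have bb : (2 : rat) <= b%:R by rewrite (ler_nat _ 2 b).
nra.
Qed.
Lemma nonneg_nat (z : int) : 0 <= z -> exists a : nat, z = a%:Z.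
Proof. by case: z => [a|a] //; exists a. Qed.

Lemma scan_sum (Af : int -> int) fuel : (forall l, 0 <= Af l) -> forall l : int,
  \sum_(1 <= x < (`|(\sum_(j < fuel) Af (l - j%:Z))%R|%N).+1)
      ((scan_count Af l x%:Z fuel)%:R : rat)
   = \sum_(j < fuel) (j.+1)%:R * (Af (l - j%:Z))%:~R.
Proof.
move=> Ag0; elim: fuel => [|n IH] l.
  by rewrite !big_ord0 big_geq.
rewrite !big_ord_recl /= subr0.
have e : forall j : 'I_n, l - (bump 0 j)%:Z = (l - 1) - j%:Z.
  by move=> j; rewrite /bump /=; lia.
rewrite (eq_bigr (fun j : 'I_n => Af ((l - 1) - j%:Z))); last by move=> j _; rewrite e.
rewrite (eq_bigr (fun j : 'I_n => ((j.+1)%:R * (Af ((l - 1) - j%:Z))%:~R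
    + (Af ((l - 1) - j%:Z))%:~R) : rat)); last first.
  by move=> j _; rewrite e /bump /= add1n -[(j.+2)%:R]natr1 mulrDl mul1r.
rewrite big_split /= -IH.
set S' := \sum_(j<n) Af (l - 1 - j%:Z).
have [a Ha] := @nonneg_nat _ (Ag0 l).
have [s Hs] : exists s : nat, S' = s%:Z by apply: nonneg_nat; rewrite sumr_ge0.
have P2 : \sum_(a.+1 <= x < (a+s).+1) ((scan_count Af l x%:Z n.+1)%:R : rat)
   = \sum_(1 <= y < s.+1) ((scan_count Af (l-1) y%:Z n)%:R + 1).
  rewrite -{1}[a.+1]add1n big_addn.
  have -> : ((a+s).+1 - a = s.+1)%N by lia.
  apply: eq_big_nat => y /andP[y1 _] /=.
  rewrite Ha ifF; last by apply/negbTE; rewrite -ltNge; lia.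
  by rewrite -natr1; congr (_%:R + 1); congr scan_count; lia.
have E : `|(Af l + S')%R|%N = (a + s)%N by rewrite Ha Hs -PoszD absz_nat.
rewrite E (@big_cat_nat _ _ _ a.+1 1 (a+s).+1) //; last by lia.
rewrite P2 big_split /=.
rewrite (@eq_big_nat _ _ _ 1 a.+1 _ (fun=> 1)); last first.
  by move=> x /andP[x1 xa] /=; rewrite Ha ifT //; lia.
rewrite sumr_const_nat subn1 /= sumr_const_nat subn1 /=.
have ES : \sum_(i<n) ((Af (l-1-i%:Z))%:~R : rat) = s%:R.
  by rewrite -rmorph_sum -/S' Hs.
rewrite ES Ha mul1r Hs absz_nat.
by [].
Qed.

Lemma reindex (R : Type) (idx : R) (op : Monoid.com_law idx) (F : int -> R)
  (lo : int) (M N : nat) :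
  (M < N)%N -> (forall l, l < lo -> F l = idx) ->
  (forall i : nat, (M < i < N)%N -> F (lo + i%:Z) = idx) ->
  \big[op/idx]_(j < N) F (lo + M%:Z - j%:Z) = \big[op/idx]_(i < N) F (lo + i%:Z).
Proof.
move=> MN Hlo Hhi.
rewrite -(big_mkord xpredT (fun j => F (lo + M%:Z - j%:Z))).
rewrite -(big_mkord xpredT (fun j => F (lo + j%:Z))).
rewrite (@big_cat_nat _ _ _ M.+1 0 N) // (@big_cat_nat _ _ _ M.+1 0 N (fun=> true) (fun j => F (lo + j%:Z))) //.
have L2 : \big[op/idx]_(M.+1 <= j < N) F (lo + M%:Z - j%:Z) = idx.
  rewrite big1_seq // => j; rewrite mem_index_iota => /andP[_ /andP[j1 j2]].
  by apply: Hlo; lia.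
have R2 : \big[op/idx]_(M.+1 <= j < N) F (lo + j%:Z) = idx.
  rewrite big1_seq // => j; rewrite mem_index_iota => /andP[_ /andP[j1 j2]].
  by apply: Hhi; lia.
rewrite L2 R2 !Monoid.mulm1 big_nat_rev.
apply: eq_big_nat => i /andP[_ iM]; congr F; lia.
Qed.

Lemma sumn_le (s : seq nat) c : (forall x, x \in s -> x < c)%N ->
  (sumn s <= size s * c)%N.
Proof.
elim: s => [|x s IH] //= H.
have := H x (mem_head _ _); have := IH (fun y hy => H y (mem_behead (s:=x::s) hy)).
rewrite mulSn; lia.
Qed.

Lemma sumn_ge (s : seq nat) c : s != [::] -> (forall x, x \in s -> c <= x)%N ->
  (c <= sumn s)%N.
Proof.
case: s => [|x s] //= _ H; have := H x (mem_head _ _); lia.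
Qed.

Lemma Alev_bounds lo N ms G l :
  let v := (SS lo N ms l)%:R * (2%:R : rat) ^ l * (2%:R : rat) ^ G in
  [/\ 0 <= v, v <= (Alev lo N ms G l)%:~R, (Alev lo N ms G l)%:~R <= v + 1
    & 0 <= Alev lo N ms G l].
Proof.
move=> v.
have v0 : 0 <= v by rewrite /v !mulr_ge0 // exprz_ge0.
rewrite /Alev; case: ifP => h.
  rewrite -/v; split => //.
  - by apply: ltW; apply: floorD1_gt.
  - by rewrite intrD lerD2r floor_le.
  - by rewrite addr_ge0 // floor_ge0.
have -> : v = 0 by rewrite /v; move: h; rewrite lt0n => /negbFE/eqP ->; rewrite !mul0r.
by split.
Qed.

Lemma tri_sum N : 2 * \sum_(j < N) ((j.+1)%:R : rat) = (N * N.+1)%:R.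
Proof.
elim: N => [|N IH]; first by rewrite big_ord0 mulr0.
rewrite big_ord_recr /= mulrDr IH -natrM -natrD; congr _%:R; lia.
Qed.

Theorem mainTheorem13 (b K N : nat) (lo G : int) (ms : nat -> seq nat) :
  (2 <= b)%N ->
  (1 <= K)%N ->
  normalized b N ms ->
  (total_count N ms < 2 ^ b)%N ->
  (1 <= total_count N ms)%N ->
  (2 ^ K)%:Z <= Atot lo N ms G ->
  Atot lo N ms G < (2 ^ b)%:Z ->
  expected_scanned lo N ms G
    <= (2 * b)%:R + (N * N.+1)%:R / (2 ^ K.+1)%:R.
Proof.
move=> b2 K1 norm zlt z1 AK Ab.
set M := (\max_(i < N | ms i != [::]) (i : nat))%N.
have [i0 Hi0] : exists i0 : 'I_N, ms i0 != [::].
  case: (pickP (fun i : 'I_N => ms i != [::])) => [i Hi | H]; first by exists i.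
  exfalso; move: z1; rewrite /total_count big1 // => i _.
  by have := H i; move/negbFE/eqP => ->.
have cardA : (0 < #|[pred i : 'I_N | ms i != [::]]|)%N by apply/card_gt0P; exists i0.
have [iM HiM HM] := eq_bigmax_cond (fun i : 'I_N => (i : nat)) cardA.
have eM : M = iM by rewrite -HM.
have MN : (M < N)%N by rewrite eM ltn_ord.
have HMne : ms M != [::] by rewrite eM.
have Hhi : forall i, (M < i < N)%N -> ms i = [::].
  move=> i /andP[Mi iN]; apply/eqP; apply: contraTT Mi => hi; rewrite -leqNgt.
  exact: (@leq_bigmax_cond _ (fun i : 'I_N => ms i != [::]) (fun i : 'I_N => (i:nat)) (Ordinal iN) hi).
have lamE : lambda lo N ms = lo + M%:Z by [].
have SSin : forall i, (i < N)%N -> SS lo N ms (lo + i%:Z) = sumn (ms i).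
  move=> i iN; rewrite /SS ifT; last by apply/andP; split; lia.
  have -> : (lo + i%:Z - lo) = i%:Z by lia.
  by [].
have SSlo : forall l, l < lo -> SS lo N ms l = 0%N.
  by move=> l hl; rewrite /SS ifF //; apply/negbTE; rewrite negb_and -ltNge hl.
have SShi : forall i, (M < i < N)%N -> SS lo N ms (lo + i%:Z) = 0%N.
  move=> i hi; have iN : (i < N)%N by case/andP: hi.
  by rewrite SSin // Hhi.
set Af := Alev lo N ms G.
have Af0 : forall l, SS lo N ms l = 0%N -> Af l = 0.
  by move=> l h; rewrite /Af /Alev h.
have Ag0 : forall l, 0 <= Af l.
  by move=> l; have [] := Alev_bounds lo N ms G l.
have AE : Atot lo N ms G = \sum_(j < N) Af (lo + M%:Z - j%:Z).
  symmetry; apply: reindex => //.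
  - by move=> l hl; apply: Af0; apply: SSlo.
  - by move=> k hk; apply: Af0; apply: SShi.
rewrite /expected_scanned /= lamE -/Af AE scan_sum //.
rewrite rmorph_sum /=.
set lam := lo + M%:Z.
pose a j := ((Af (lam - j%:Z))%:~R : rat).
pose w j := (SS lo N ms (lam - j%:Z))%:R * (2%:R : rat) ^ (lam - j%:Z) * (2%:R : rat) ^ G.
have hw : forall j, [/\ 0 <= w j, w j <= a j & a j <= w j + 1].
  by move=> j; have [] := Alev_bounds lo N ms G (lam - j%:Z).
pose P := (2%:R : rat) ^ lam * (2%:R : rat) ^ G.
have P0 : 0 < P by rewrite /P mulr_gt0 // exprz_gt0.
have wE j : w j = (SS lo N ms (lam - j%:Z))%:R * P * (2 ^+ j)^-1.
  rewrite /w /P expfzDr // -exprnN; ring.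
have SSsum : \sum_(j<N) ((SS lo N ms (lam - j%:Z))%:R : rat)
     <= ((total_count N ms * 2^b)%N)%:R.
  have RE : (\sum_(j<N) SS lo N ms (lam - j%:Z) = \sum_(i<N) SS lo N ms (lo + i%:Z))%N.
    by apply: reindex.
  rewrite -natr_sum ler_nat RE.
  rewrite (eq_bigr (fun i : 'I_N => sumn (ms i))); last by move=> i _; apply: SSin.
  rewrite /total_count big_distrl /=; apply: leq_sum => i _; apply: sumn_le.
  by move=> x hx; have /andP[] := norm i (ltn_ord i) x hx.
have w0E : w 0%N = (sumn (ms M))%:R * P.
  by rewrite wE subr0 SSin // expr0 invr1 mulr1.
have w0ge : (2^(b.-1))%:R * P <= w 0%N.
  rewrite w0E ler_pM2r // ler_nat; apply: sumn_ge => // x hx.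
  by have /andP[] := norm M MN x hx.
have tail : forall k, (k < N)%N -> 2 ^+ k * \sum_(k <= j < N) w j <= 2 ^+ b.+1 * w 0%N.
  move=> k kN; rewrite mulr_sumr.
  apply: (@le_trans _ _ (\sum_(k <= j < N) (SS lo N ms (lam - j%:Z))%:R * P)).
    apply: ler_sum_nat => j /andP[kj jN]; rewrite wE.
    have h : (2:rat) ^+ k / 2 ^+ j <= 1.
      by rewrite ler_pdivrMr ?exprn_gt0 // mul1r ler_weXn2l // ler1n.
    have X0 : 0 <= (SS lo N ms (lam - j%:Z))%:R * P by rewrite mulr_ge0 // ltW.
    set X := _ * P in X0 *; set e := (2:rat) ^+ k in h *; set f := (2 ^+ j)^-1 in h *.
    nra.
  apply: (@le_trans _ _ (\sum_(0 <= j < N) (SS lo N ms (lam - j%:Z))%:R * P)).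
    rewrite (@big_cat_nat _ _ _ k 0 N) //=; last by apply: ltnW.
    rewrite lerDr; apply: sumr_ge0 => j _; apply: mulr_ge0 => //; exact: ltW.
  rewrite big_mkord -mulr_suml.
  apply: (@le_trans _ _ (((total_count N ms * 2^b)%N)%:R * P)); first by rewrite ler_pM2r.
  apply: (@le_trans _ _ (((2^b.+1 * 2^b.-1)%N)%:R * P)).
    rewrite ler_pM2r // ler_nat.
    have -> : (2^b.+1 * 2^b.-1 = 2^b * 2^b)%N by rewrite -!expnD; congr (_ ^ _)%N; lia.
    by rewrite leq_mul // ltnW.
  by rewrite natrM natrX -mulrA ler_pM2l ?exprn_gt0.
have C := @core b N w b2 (leq_ltn_trans (leq0n M) MN) (fun j => let: And3 h _ _ := hw j in h) tail.
set T := \sum_(j < N) w j in C.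
have -> : \sum_(i < N) ((Af (lam - i%:Z))%:~R : rat) = \sum_(i < N) a i by [].
have -> : \sum_(j < N) (j.+1)%:R * ((Af (lam - j%:Z))%:~R : rat) = \sum_(j < N) (j.+1)%:R * a j by [].
set Ar := \sum_(i < N) a i.
have TA : T <= Ar by apply: ler_sum => j _; have [] := hw j.
have T0 : 0 <= T by apply: sumr_ge0 => j _; have [] := hw j.
have S1 : \sum_(j < N) (j.+1)%:R * a j <= \sum_(j < N) (j.+1)%:R * w j + \sum_(j < N) ((j.+1)%:R : rat).
  rewrite -big_split /=; apply: ler_sum => j _; rewrite -[X in _ <= _ + X]mulr1 -mulrDr.
  by apply: ler_wpM2l => //; have [] := hw j.
have TS := tri_sum N.
have AKr : ((2^K)%N%:R : rat) <= Ar.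
  by have := AK; rewrite AE -(ler_int rat) rmorph_sum.
set c := ((2^K)%N%:R : rat) in AKr.
have c0 : 0 < c by rewrite /c ltr0n expn_gt0.
have Ar0 : 0 < Ar by apply: lt_le_trans AKr.
rewrite mulrC ler_pdivrMr //.
have -> : ((2 ^ K.+1)%N%:R : rat) = 2 * c by rewrite expnS natrM.
set Q := ((N * N.+1)%N%:R : rat) in TS *.
have uc : Q / (2 * c) * c = Q / 2 by field; rewrite gt_eqF.
have u0 : 0 <= Q / (2 * c) by rewrite divr_ge0 // mulr_ge0 // ltW.
set u := Q / (2 * c) in uc u0 *.
rewrite natrM.
have B0 : (0 : rat) <= b%:R by [].
set S := \sum_(j < N) _ in S1 *.
set Sw := \sum_(j < N) (j.+1)%:R * w j in S1 C.
set s1 := \sum_(j < N) ((j.+1)%:R : rat) in S1 TS.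
rewrite natrM in C.
set B := (b%:R : rat) in B0 C *.
nra.
Qed.
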